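(* Let $G=(V,E)$ be a connected, locally finite graph with edge weights $w_{xy}\ge w_{min}>0$ for all $xy\in E$ and $\mu\le\mu_{max}$ on $V$, and let $\alpha\in(0,1)$. Suppose $u:(0,\infty)\times V\to(0,\infty)$ is $C^1$ in time and satisfies $$\partial_t(\log u)\ge\Psi_\Upsilon(\log u)-\tfrac1\alpha\Psi_{\Upsilon_\alpha}(\log u)-\eta_\alpha(t)\quad\text{on }(0,\infty)\times V,$$ where $\eta_\alpha:(0,\infty)\to[0,\infty)$ is continuous. Then for any $0<t_1<t_2$ and $x_1,x_2\in V$, $$u(t_1,x_1)\le u(t_2,x_2)\exp\Big(\int_{t_1}^{t_2}\eta_\alpha(t)\,dt+\frac{2\mu_{max}\,d(x_1,x_2)^2}{w_{min}(1-\alpha)(t_2-t_1)}\Big).$$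
   Context: Graphs are undirected; $x\sim y$ means $xy\in E$; $w_{xy}=w_{yx}>0$; $\mu:V\to(0,\infty)$; $d$ is the combinatorial graph distance. For $H:\mathbb R\to\mathbb R$, $\Psi_H(v)(x)=\frac1{\mu(x)}\sum_{y\sim x}w_{xy}H(v(y)-v(x))$; $\Upsilon(z)=e^z-1-z$ and $\Upsilon_\alpha(z)=\Upsilon(\alpha z)$. *)

(* Defs.v *)
From Stdlib Require Import Reals Lra List.
Open Scope R_scope.

Definition Ups (z : R) : R := exp z - 1 - z.
Definition Ups_a (a z : R) : R := Ups (a * z).

(* Psi_H(v)(x) = 1/mu(x) * sum_{y ~ x} w_xy H(v(y) - v(x)),
   the neighbours of x being listed (without repetition) by nbrs x. *)
Definition Psi {V : Type} (nbrs : V -> list V) (w : V -> V -> R) (mu : V -> R)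
  (H : R -> R) (v : V -> R) (x : V) : R :=
  / mu x * fold_right (fun y acc => w x y * H (v y - v x) + acc) 0 (nbrs x).

Inductive walk {V : Type} (adj : V -> V -> Prop) : nat -> V -> V -> Prop :=
| walk0 : forall x, walk adj 0 x x
| walkS : forall n x y z, adj x y -> walk adj n y z -> walk adj (S n) x z.

Definition graph_dist {V : Type} (adj : V -> V -> Prop) (x y : V) (n : nat) : Prop :=
  walk adj n x y /\ forall m, walk adj m x y -> (n <= m)%nat.

Definition connected {V : Type} (adj : V -> V -> Prop) : Prop :=
  forall x y : V, exists n, walk adj n x y.

(* Main.v *)
Require Import Defs.
From Stdlib Require Import Reals List Lra.
From Coquelicot Require Coquelicot.
Open Scope R_scope.

Module Aux.
Import Coquelicot.Coquelicot.

Lemma prim_deriv (eta : R -> R) t1 (Ht1 : 0 < t1)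
  (Hc : forall t, 0 < t -> continuity_pt eta t) t (Ht : 0 < t) :
  derivable_pt_lim (fun s => RInt eta t1 s) t (eta t).
Proof.
  apply is_derive_Reals.
  apply (is_derive_RInt eta (fun s => RInt eta t1 s) t1 t).
  - assert (Hp : 0 < t/2) by lra.
    exists (mkposreal _ Hp). intros b Hb.
    change (Rabs (b - t) < t/2) in Hb.
    apply Rabs_def2 in Hb.
    apply (RInt_correct eta t1 b), ex_RInt_continuous. intros z Hz.
    apply continuity_pt_filterlim, Hc.
    assert (0 < Rmin t1 b) by (apply Rmin_glb_lt; lra). lra.
  - apply continuity_pt_filterlim, Hc; lra.
Qed.

Lemma mono (F F' : R -> R) a b : a <= b ->
  (forall t, a <= t <= b -> derivable_pt_lim F t (F' t)) ->
  (forall t, a <= t <= b -> 0 <= F' t) -> F a <= F b.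
Proof.
  intros Hab HD HP. destruct (Req_dec a b) as [->|Hne]; [lra|].
  destruct (MVT_cor2 F F' a b ltac:(lra) HD) as [c [Hc1 Hc2]].
  assert (0 <= F' c) by (apply HP; lra).
  assert (0 <= F' c * (b - a)) by (apply Rmult_le_pos; lra). lra.
Qed.


Definition Hf (a z : R) := Ups z - / a * Ups_a a z.

Lemma Hf_der a t : 0 < a -> derivable_pt_lim (Hf a) t (exp t - exp (a * t)).
Proof. intro. apply is_derive_Reals. unfold Hf, Ups_a, Ups. auto_derive; [trivial|field; lra]. Qed.

Lemma Hf0 a : 0 < a -> Hf a 0 = 0.
Proof. intro. unfold Hf, Ups_a, Ups. rewrite Rmult_0_r, exp_0. field; lra. Qed.

Lemma Hf_nonneg a z : 0 < a < 1 -> 0 <= Hf a z.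
Proof.
  intro Ha. rewrite <- (Hf0 a) by lra.
  destruct (Rle_lt_dec 0 z).
  - apply (mono (Hf a) (fun t => exp t - exp (a * t))); auto.
    + intros; apply Hf_der; lra.
    + intros t Ht. assert (a * t <= t) by nra.
      destruct (Req_dec (a*t) t) as [->|]; [lra|].
      assert (exp (a*t) < exp t) by (apply exp_increasing; lra). lra.
  - assert (- Hf a z <= - Hf a 0); [|lra].
    apply (mono (fun s => - Hf a s) (fun t => - (exp t - exp (a * t)))); [lra| |].
    + intros; apply derivable_pt_lim_opp, Hf_der; lra.
    + intros t Ht. assert (t <= a * t) by nra.
      destruct (Req_dec (a*t) t) as [->|]; [lra|].
      assert (exp t < exp (a*t)) by (apply exp_increasing; lra). lra.
Qed.

Lemma Hf_quad a z : 0 < a < 1 -> 0 <= z -> (1 - a) / 2 * z ^ 2 <= Hf a z.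
Proof.
  intros Ha Hz.
  set (G1 := fun t => exp t - exp (a * t) - (1 - a) * t).
  assert (HG1 : forall t, 0 <= t -> 0 <= G1 t).
  { intros t Ht. replace 0 with (G1 0) by (unfold G1; rewrite Rmult_0_r, exp_0; ring).
    apply (mono G1 (fun s => exp s - a * exp (a * s) - (1 - a))); auto.
    - intros s _. apply is_derive_Reals. unfold G1. auto_derive; [trivial|ring].
    - intros s Hs. assert (a * s <= s) by nra.
      assert (exp (a*s) <= exp s).
      { destruct (Req_dec (a*s) s) as [->|]; [lra|].
        left; apply exp_increasing; lra. }
      assert (1 <= exp (a*s)).
      { rewrite <- exp_0. destruct (Req_dec (a*s) 0) as [->|]; [lra|].
        left; apply exp_increasing; nra. }
      nra. }
  assert (Hf a 0 - (1-a)/2 * 0^2 <= Hf a z - (1-a)/2*z^2); [|rewrite Hf0 in H; lra].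
  apply (mono (fun s => Hf a s - (1-a)/2 * s^2) G1); auto.
  - intros s _. apply is_derive_Reals.
    apply (is_derive_ext (fun s => Ups s - / a * Ups_a a s - (1-a)/2 * s^2)); [reflexivity|].
    unfold Ups_a, Ups, G1. auto_derive; [trivial|field; lra].
  - intros; apply HG1; lra.
Qed.


Lemma edge (Fx Fy Fy' : R -> R) a b c al : 0 < al < 1 -> 0 < c -> a < b ->
  (forall r, a <= r <= b -> Fx a <= Fx r) ->
  (forall r, a <= r <= b -> derivable_pt_lim Fy r (Fy' r)) ->
  (forall r, a <= r <= b -> c * Hf al (Fx r - Fy r) <= Fy' r) ->
  Fx a <= Fy b + 2 / (c * (1 - al) * (b - a)).
Proof.
  intros Hal Hc Hab HFx HD HI.
  assert (HK : 0 < 2 / (c * (1 - al) * (b - a))).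
  { apply Rdiv_lt_0_compat; [lra|]. apply Rmult_lt_0_compat; [|lra]. apply Rmult_lt_0_compat; lra. }
  destruct (Rle_lt_dec (Fx a - Fy b) 0) as [Hle|HA]; [lra|].
  assert (HP' : forall r, a <= r <= b -> 0 <= Fy' r).
  { intros r Hr. specialize (HI r Hr). pose proof (Hf_nonneg al (Fx r - Fy r) Hal). nra. }
  assert (HFy : forall r, a <= r <= b -> Fy r <= Fy b).
  { intros r Hr. apply (mono Fy Fy'); try lra; intros; [apply HD|apply HP']; lra. }
  set (k := c * (1 - al) / 2).
  assert (Hk : 0 < k) by (unfold k; apply Rmult_lt_0_compat; [apply Rmult_lt_0_compat|]; lra).
  assert (Hpsi : / (Fx a - Fy a) - k * a <= / (Fx a - Fy b) - k * b).
  { apply (mono (fun r => / (Fx a - Fy r) - k * r)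
                (fun r => Fy' r / (Fx a - Fy r) ^ 2 - k)); [lra| |].
    - intros r Hr. apply is_derive_Reals.
      assert (Hphi : is_derive (fun r => Fx a - Fy r) r (- Fy' r)).
      { apply is_derive_Reals.
        pose proof (derivable_pt_lim_minus (fun _ => Fx a) Fy r 0 (Fy' r)
          (derivable_pt_lim_const _ _) (HD r Hr)) as Hm.
        unfold minus_fct in Hm.
        replace (- Fy' r) with (0 - Fy' r) by ring. exact Hm. }
      pose proof (HFy r Hr).
      assert (Hinv := is_derive_inv _ _ _ Hphi ltac:(lra)).
      assert (Hl : is_derive (fun r => k * r) r (k * 1)).
      { apply is_derive_scal. apply is_derive_Reals. apply derivable_pt_lim_id. }
      pose proof (is_derive_minus _ _ _ _ _ Hinv Hl) as Hm.
      unfold minus, plus, opp in Hm; simpl in Hm.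
      replace (Fy' r / (Fx a - Fy r) ^ 2 - k) with (- - Fy' r / (Fx a - Fy r) ^ 2 + - (k * 1)) by (field; lra).
      exact Hm.
    - intros r Hr. pose proof (HFy r Hr) as H1. pose proof (HFx r Hr) as H2.
      pose proof (HI r Hr) as H3.
      pose proof (Hf_quad al (Fx r - Fy r) Hal ltac:(lra)) as H4.
      remember (Fx a - Fy r) as phi eqn:Ephi.
      assert (Hphi : 0 < phi) by lra.
      assert (k * phi ^ 2 <= Fy' r).
      { assert (phi ^ 2 <= (Fx r - Fy r) ^ 2) by (simpl; nra).
        unfold k. assert (0 < 1 - al) by lra.
        apply Rle_trans with (c * ((1 - al) / 2 * (Fx r - Fy r) ^ 2)).
        - replace (c * (1 - al) / 2 * phi ^ 2) with (c * ((1 - al) / 2 * phi ^ 2)) by field.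
          apply Rmult_le_compat_l; [lra|]. apply Rmult_le_compat_l; lra.
        - apply Rle_trans with (c * Hf al (Fx r - Fy r)); [|lra].
          apply Rmult_le_compat_l; lra. }
      assert (0 < phi ^ 2) by (apply pow_lt; lra).
      apply (Rmult_le_reg_r (phi ^ 2)); [lra|].
      replace ((Fy' r / phi ^ 2 - k) * phi ^ 2) with (Fy' r - k * phi ^ 2) by (field; lra).
      lra. }
  assert (Hpa : 0 < Fx a - Fy a) by (pose proof (HFy a ltac:(lra)); lra).
  assert (0 < / (Fx a - Fy a)) by (apply Rinv_0_lt_compat; lra).
  assert (Hkb : k * (b - a) < / (Fx a - Fy b)) by lra.
  assert (k * (b - a) * (Fx a - Fy b) < 1).
  { apply (Rmult_lt_compat_r (Fx a - Fy b)) in Hkb; [|lra]. rewrite Rinv_l in Hkb; lra. }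
  assert (2 / (c * (1 - al) * (b - a)) = / (k * (b - a))) by (unfold k; field; repeat split; lra).
  assert (Fx a - Fy b < / (k * (b - a))).
  { assert (0 < k * (b - a)) by (apply Rmult_lt_0_compat; lra).
    apply (Rmult_lt_reg_l (k * (b - a))); [lra|]. rewrite Rinv_r; lra. }
  lra.
Qed.


Lemma prim_exists (eta : R -> R) t1 t2 (Ht1 : 0 < t1)
  (Hc : forall t, 0 < t -> continuity_pt eta t) (pr : Riemann_integrable eta t1 t2) :
  exists P : R -> R, (forall t, 0 < t -> derivable_pt_lim P t (eta t)) /\ P t1 = 0 /\ P t2 = RiemannInt pr.
Proof.
  exists (fun s => RInt eta t1 s). split; [|split].
  - intros; apply prim_deriv; auto.
  - exact (RInt_point (V:=R_CompleteNormedModule) t1 eta).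
  - apply RInt_Reals.
Qed.


Lemma fold_split {V : Type} (v : V -> R) (w : V -> V -> R) x al (l : list V) :
  fold_right (fun y acc => w x y * Ups (v y - v x) + acc) 0 l
  - / al * fold_right (fun y acc => w x y * Ups_a al (v y - v x) + acc) 0 l
  = fold_right (fun y acc => w x y * Hf al (v y - v x) + acc) 0 l.
Proof. induction l as [|z l IH]; simpl; [ring|]. rewrite <- IH. unfold Hf. ring. Qed.

Lemma fold_ge {V : Type} (v : V -> R) (w : V -> V -> R) x al (l : list V) :
  0 < al < 1 -> (forall z, In z l -> 0 <= w x z) ->
  0 <= fold_right (fun y acc => w x y * Hf al (v y - v x) + acc) 0 l /\
  (forall y, In y l -> w x y * Hf al (v y - v x) <=
     fold_right (fun y acc => w x y * Hf al (v y - v x) + acc) 0 l).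
Proof.
  intros Hal. induction l as [|z l IH]; intros Hw; simpl.
  - split; [lra|tauto].
  - destruct IH as [IH1 IH2]; [intros; apply Hw; simpl; auto|].
    assert (0 <= w x z * Hf al (v z - v x)).
    { apply Rmult_le_pos; [apply Hw; simpl; auto|apply Hf_nonneg; auto]. }
    split; [lra|]. intros y [->|Hy]; [lra|]. specialize (IH2 y Hy). lra.
Qed.

End Aux.
Import Aux.


Theorem theorem6p2
  (V : Type) (adj : V -> V -> Prop) (nbrs : V -> list V)
  (* undirected, locally finite, connected graph *)
  (Hsym : forall x y, adj x y -> adj y x)
  (Hnbrs : forall x y, In y (nbrs x) <-> adj x y)
  (Hnodup : forall x, NoDup (nbrs x))
  (Hconn : connected adj)
  (* weights and measure *)
  (w : V -> V -> R) (mu : V -> R) (wmin mumax : R)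
  (Hwmin : 0 < wmin)
  (Hwsym : forall x y, w x y = w y x)
  (Hw : forall x y, adj x y -> wmin <= w x y)
  (Hmu : forall x, 0 < mu x)
  (Hmumax : forall x, mu x <= mumax)
  (alpha : R) (Halpha : 0 < alpha < 1)
  (* u : (0,oo) x V -> (0,oo), C^1 in time with time derivative du *)
  (u du : R -> V -> R)
  (Hupos : forall t x, 0 < t -> 0 < u t x)
  (Hder : forall t x, 0 < t -> derivable_pt_lim (fun s => u s x) t (du t x))
  (Hdcont : forall t x, 0 < t -> continuity_pt (fun s => du s x) t)
  (eta : R -> R)
  (Heta_nonneg : forall t, 0 < t -> 0 <= eta t)
  (Heta_cont : forall t, 0 < t -> continuity_pt eta t)
  (* d/dt log u >= Psi_Ups(log u) - 1/alpha Psi_{Ups_alpha}(log u) - eta *)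
  (Hineq : forall t x, 0 < t ->
     du t x / u t x >=
       Psi nbrs w mu Ups (fun y => ln (u t y)) x
       - / alpha * Psi nbrs w mu (Ups_a alpha) (fun y => ln (u t y)) x
       - eta t) :
  forall (t1 t2 : R) (x1 x2 : V) (n : nat),
    0 < t1 -> t1 < t2 ->
    graph_dist adj x1 x2 n ->
    forall pr : Riemann_integrable eta t1 t2,
      u t1 x1 <=
        u t2 x2 * exp (RiemannInt pr
          + 2 * mumax * (INR n) ^ 2 / (wmin * (1 - alpha) * (t2 - t1))).
Proof.
  intros t1 t2 x1 x2 n Ht1 Ht12 [Hwalk _] pr.
  assert (Hmm : 0 < mumax) by (pose proof (Hmu x1); pose proof (Hmumax x1); lra).
  set (c := wmin / mumax).
  assert (Hc : 0 < c) by (unfold c; apply Rdiv_lt_0_compat; lra).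
  destruct (prim_exists eta t1 t2 Ht1 Heta_cont pr) as [P [HPd [HP1 HP2]]].
  set (f := fun t x => ln (u t x) + P t).
  set (g := fun t x => du t x / u t x + eta t).
  assert (HfD : forall x t, 0 < t -> derivable_pt_lim (fun s => f s x) t (g t x)).
  { intros x t Ht.
    pose proof (derivable_pt_lim_comp (fun s => u s x) ln t (du t x) (/ u t x)
                 (Hder t x Ht) (derivable_pt_lim_ln _ (Hupos t x Ht))) as H1.
    pose proof (derivable_pt_lim_plus _ _ t _ _ H1 (HPd t Ht)) as H2.
    unfold g. replace (du t x / u t x + eta t) with (/ u t x * du t x + eta t) by (unfold Rdiv; ring).
    exact H2. }
  assert (Hg0 : forall x t, 0 < t ->
     /mu x * fold_right (fun y acc => w x y * Hf alpha (ln (u t y) - ln (u t x)) + acc) 0 (nbrs x)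
     <= g t x).
  { intros x t Ht. specialize (Hineq t x Ht). unfold Psi in Hineq.
    pose proof (fold_split (fun y => ln (u t y)) w x alpha (nbrs x)) as Hs. simpl in Hs.
    unfold g.
    replace (/ mu x * fold_right (fun y acc => w x y * Hf alpha (ln (u t y) - ln (u t x)) + acc) 0 (nbrs x))
      with (/ mu x * fold_right (fun y acc => w x y * Ups (ln (u t y) - ln (u t x)) + acc) 0 (nbrs x) -
        / alpha * (/ mu x * fold_right (fun y acc => w x y * Ups_a alpha (ln (u t y) - ln (u t x)) + acc) 0 (nbrs x)))
      by (rewrite <- Hs; ring).
    lra. }
  assert (Hwpos : forall x z, In z (nbrs x) -> 0 <= w x z).
  { intros x z Hz. apply Hnbrs in Hz. apply Hw in Hz. lra. }
  assert (Hgpos : forall x t, 0 < t -> 0 <= g t x).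
  { intros x t Ht. eapply Rle_trans; [|apply Hg0; auto].
    apply Rmult_le_pos; [left; apply Rinv_0_lt_compat; auto|].
    exact (proj1 (fold_ge (fun y => ln (u t y)) w x alpha (nbrs x) Halpha (Hwpos x))). }
  assert (Hg : forall x y t, 0 < t -> adj x y -> c * Hf alpha (f t y - f t x) <= g t x).
  { intros x y t Ht Hxy. eapply Rle_trans; [|apply Hg0; auto].
    assert (Hin : In y (nbrs x)) by (apply Hnbrs; auto).
    destruct (fold_ge (fun y => ln (u t y)) w x alpha (nbrs x) Halpha (Hwpos x)) as [_ Hf2].
    specialize (Hf2 y Hin). simpl in Hf2.
    replace (f t y - f t x) with (ln (u t y) - ln (u t x)) by (unfold f; ring).
    pose proof (Hf_nonneg alpha (ln (u t y) - ln (u t x)) Halpha) as HH.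
    assert (Hcw : c <= / mu x * w x y).
    { unfold c. pose proof (Hw x y Hxy). pose proof (Hmu x). pose proof (Hmumax x).
      assert (/ mumax <= / mu x) by (apply Rinv_le_contravar; lra).
      assert (0 < / mumax) by (apply Rinv_0_lt_compat; lra).
      unfold Rdiv. rewrite Rmult_comm. apply Rmult_le_compat; lra. }
    apply Rle_trans with (/ mu x * w x y * Hf alpha (ln (u t y) - ln (u t x))).
    - apply Rmult_le_compat_r; auto.
    - rewrite Rmult_assoc. apply Rmult_le_compat_l; [|exact Hf2].
      left; apply Rinv_0_lt_compat; auto. }
  assert (Hmono : forall x a b, t1 <= a <= b -> f a x <= f b x).
  { intros x a b Hab. apply (mono (fun s => f s x) (fun s => g s x)); [lra| |];
      intros; [apply HfD|apply Hgpos]; lra. }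
  assert (Hpath : forall m x z, walk adj m x z -> forall a tau, t1 <= a -> 0 < tau ->
     f a x <= f (a + INR m * tau) z + INR m * (2 / (c * (1 - alpha) * tau))).
  { induction 1 as [x|m x y z Hxy Hw' IH]; intros a tau Ha Htau.
    - simpl. replace (a + 0 * tau) with a by ring. lra.
    - assert (He : f a x <= f (a + tau) y + 2 / (c * (1 - alpha) * (a + tau - a))).
      { apply (edge (fun s => f s x) (fun s => f s y) (fun s => g s y) a (a + tau) c alpha);
          auto; try lra.
        - intros r Hr. apply Hmono; lra.
        - intros r Hr. apply HfD; lra.
        - intros r Hr. apply Hg; [lra|]. apply Hsym; auto. }
      replace (a + tau - a) with tau in He by ring.
      specialize (IH (a + tau) tau ltac:(lra) Htau).
      rewrite S_INR.
      replace (a + (INR m + 1) * tau) with (a + tau + INR m * tau) by ring. lra. }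
  assert (Hmain : f t1 x1 <= f t2 x2 + 2 * mumax * (INR n) ^ 2 / (wmin * (1 - alpha) * (t2 - t1))).
  { destruct n as [|m].
    - inversion Hwalk; subst. simpl. replace (2 * mumax * (0 * 1) / (wmin * (1 - alpha) * (t2 - t1))) with 0 by (field; repeat split; lra).
      pose proof (Hmono x2 t1 t2 ltac:(lra)). lra.
    - assert (HS : 0 < INR (S m)) by (apply lt_0_INR; apply Nat.lt_0_succ).
      specialize (Hpath _ _ _ Hwalk t1 ((t2 - t1) / INR (S m)) ltac:(lra)
                   ltac:(apply Rdiv_lt_0_compat; lra)).
      replace (t1 + INR (S m) * ((t2 - t1) / INR (S m))) with t2 in Hpath by (field; lra).
      replace (2 * mumax * INR (S m) ^ 2 / (wmin * (1 - alpha) * (t2 - t1)))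
        with (INR (S m) * (2 / (c * (1 - alpha) * ((t2 - t1) / INR (S m))))).
      + exact Hpath.
      + unfold c. field. repeat split; lra. }
  unfold f in Hmain. rewrite HP1 in Hmain.
  rewrite <- HP2.
  rewrite <- (exp_ln (u t1 x1)) by (apply Hupos; lra).
  rewrite <- (exp_ln (u t2 x2)) at 1 by (apply Hupos; lra).
  rewrite <- exp_plus.
  set (E := 2 * mumax * INR n ^ 2 / (wmin * (1 - alpha) * (t2 - t1))) in *.
  destruct (Rle_lt_or_eq_dec _ _ (Rle_trans _ _ _ (Req_le _ _ (Rplus_0_r _)) Hmain)) as [Hl|He].
  - left. apply exp_increasing. lra.
  - right. f_equal. lra.
Qed.
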